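(* Let $F,G$ be Fourier matrices of the same size $N$ with indexing groups $I_F,I_G$. Then (a) $\mathrm{Stab}(F)=\{(P_\rho,P_{(h^{FF}_\rho)^{-1}}):\ \rho\in\mathrm{Aut}(I_F)\}=\{(P_{(h^{FF}_\rho)^{-1}},P_\rho):\ \rho\in\mathrm{Aut}(I_F)\}$; (b) $\mathrm{Map}(F,G)=\{(P_\chi,P_{(h^{FG}_\chi)^{-1}}):\ \chi\in\mathrm{Iso}(I_G,I_F)\}=\{(P_{(h^{FG}_\chi)^{-1}},P_\chi):\ \chi\in\mathrm{Iso}(I_G,I_F)\}$, where $\mathrm{Stab}(F)$ is the set of pairs $(P,R)$ of $N\times N$ permutation matrices with $PFR^{-1}=F$ and $\mathrm{Map}(F,G)$ is the set of such pairs with $PFR^{-1}=G$.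
   Context: For $n\ge1$, $F_n$ is the $n\times n$ matrix with rows and columns indexed by $\mathbb Z_n$ and entries $e^{2\pi i\,\tilde i\tilde j/n}$. A Fourier matrix is $F=F_{N_1}\otimes\cdots\otimes F_{N_r}$ of size $N=N_1\cdots N_r$, indexed by $I_F=\mathbb Z_{N_1}\times\cdots\times\mathbb Z_{N_r}$ with $F_{i,j}=\prod_x(F_{N_x})_{i_x,j_x}$; group indices correspond to ordinary indices via lexicographic order. For a bijection $\varphi:I_G\to I_F$, $P_\varphi$ is the permutation matrix (rows indexed by $I_G$, columns by $I_F$) with $(P_\varphi)_{i,\varphi(i)}=1$. $\mathrm{Iso}(I_G,I_F)$ is the set of group isomorphisms $I_G\to I_F$ and $\mathrm{Aut}(I_F)=\mathrm{Iso}(I_F,I_F)$. For an isomorphism $\chi:I_G\to I_F$, $h^{FG}_\chi:I_F\to I_G$ is the unique bijection with $F_{\chi(i),j}=G_{i,h^{FG}_\chi(j)}$ for all $i\in I_G$, $j\in I_F$ (it is an isomorphism). *)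

(* Defs.v *)
From HB Require Import structures.
From mathcomp Require Import all_boot all_order all_algebra.
From mathcomp Require Import complex.
From mathcomp Require Import reals trigo.

Set Implicit Arguments.
Unset Strict Implicit.
Unset Printing Implicit Defensive.

Import Order.TTheory GRing.Theory Num.Theory.
Local Open Scope ring_scope.

Definition expi {R : realType} (t : R) : R[i] := Complex (cos t) (sin t).

(* The indexing group I_F = Z_{N_1} x ... x Z_{N_r}, where N_x = (ns x).+1
   (so N_x >= 1 is built in).  Z_{N_x} is represented by 'I_(N_x). *)
Definition grp (r : nat) (ns : 'I_r -> nat) : finType :=
  {dffun forall x : 'I_r, 'I_(ns x).+1}.

Definition gadd (r : nat) (ns : 'I_r -> nat) (a b : grp ns) : grp ns :=
  @finfun 'I_r (fun x => 'I_(ns x).+1) (fun x => (a x + b x)%R).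

Definition gzero (r : nat) (ns : 'I_r -> nat) : grp ns :=
  @finfun 'I_r (fun x => 'I_(ns x).+1) (fun x => ord0).

Definition is_grp_iso (r s : nat) (ns : 'I_r -> nat) (ms : 'I_s -> nat)
    (chi : grp ns -> grp ms) : Prop :=
  bijective chi /\ forall a b, chi (gadd a b) = gadd (chi a) (chi b).

(* Group-indexed entries of F = F_{N_1} (x) ... (x) F_{N_r}:
   F_{i,j} = prod_x exp(2 pi i * i_x j_x / N_x). *)
Definition fentry {R : realType} (r : nat) (ns : 'I_r -> nat) (i j : grp ns) : R[i] :=
  \prod_(x < r) expi (2 * pi * ((i x : nat) * (j x : nat))%:R / ((ns x).+1)%:R).

(* Lexicographic correspondence: the ordinary index k corresponds to the
   group index whose x-th coordinate is (k / prod_{y > x} N_y) mod N_x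
   (first coordinate most significant, as in the Kronecker product). *)
Definition lexw (r : nat) (ns : 'I_r -> nat) (x : 'I_r) : nat :=
  (\prod_(y < r | (x < y)%N) (ns y).+1)%N.

Definition lexdec (r : nat) (ns : 'I_r -> nat) (k : nat) : grp ns :=
  @finfun 'I_r (fun x => 'I_(ns x).+1)
    (fun x => inord ((k %/ lexw ns x) %% (ns x).+1)%N).

Definition fourier_mx {R : realType} (N r : nat) (ns : 'I_r -> nat) : 'M[R[i]]_N :=
  \matrix_(k < N, l < N) fentry (lexdec ns k) (lexdec ns l).

(* P_phi for phi : I_G -> I_F (rows indexed by I_G, columns by I_F):
   (P_phi)_{i, phi(i)} = 1, other entries 0. *)
Definition Pmx {R : realType} (N r s : nat) (ns : 'I_r -> nat) (ms : 'I_s -> nat)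
    (phi : grp ms -> grp ns) : 'M[R[i]]_N :=
  \matrix_(k < N, l < N) (phi (lexdec ms k) == lexdec ns l)%:R.

(* P_{h^{-1}} for a bijection h : I_F -> I_G (so h^{-1} : I_G -> I_F; rows
   indexed by I_G, columns by I_F): entry (a, b) is 1 iff h^{-1}(a) = b,
   i.e. iff h(b) = a. *)
Definition Pinvmx {R : realType} (N r s : nat) (ns : 'I_r -> nat) (ms : 'I_s -> nat)
    (h : grp ns -> grp ms) : 'M[R[i]]_N :=
  \matrix_(k < N, l < N) (h (lexdec ns l) == lexdec ms k)%:R.

(* h^{FG}_chi : I_F -> I_G, the unique bijection with
   F_{chi(i), j} = G_{i, h(j)} for all i in I_G, j in I_F
   (chosen by [pick]; a default is returned if no such bijection exists). *)
Definition hFG {R : realType} (r s : nat) (ns : 'I_r -> nat) (ms : 'I_s -> nat)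
    (chi : grp ms -> grp ns) : grp ns -> grp ms :=
  match [pick h : {ffun grp ns -> grp ms} |
           injectiveb h && [forall y : grp ms, y \in codom h] &&
           [forall i : grp ms, forall j : grp ns,
              @fentry R r ns (chi i) j == @fentry R s ms i (h j)]] with
  | Some h => fun j => h j
  | None => fun _ => gzero ms
  end.

Definition in_Map {R : realType} (N : nat) (F G : 'M[R[i]]_N) (P Q : 'M[R[i]]_N) : Prop :=
  is_perm_mx P /\ is_perm_mx Q /\ P *m F *m invmx Q = G.

Definition in_Stab {R : realType} (N : nat) (F : 'M[R[i]]_N) (P Q : 'M[R[i]]_N) : Prop :=
  is_perm_mx P /\ is_perm_mx Q /\ P *m F *m invmx Q = F.

(* Main.v *)
Require Import Defs.
From HB Require Import structures.
From mathcomp Require Import all_boot all_order all_algebra.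
From mathcomp Require Import complex.
From mathcomp Require Import reals trigo.
From mathcomp Require Import ring lra zify.
Import Order.TTheory GRing.Theory Num.Theory.
Local Open Scope ring_scope.

Section Expi.
Variable R : realType.
Lemma expiD (a b : R) : expi (a + b) = expi a * expi b.
Proof. by rewrite /expi /= cosD sinD; congr Complex; ring. Qed.

Lemma expi0 : expi (0 : R) = 1.
Proof. by rewrite /expi cos0 sin0. Qed.

Lemma expi_2pin (t : R) (n : nat) : expi (t + 2 * pi * n%:R) = expi t.
Proof.
have -> : 2 * pi * n%:R = ((pi : R) *+ 2) *+ n.
  by rewrite -mulrnA -(mulr_natr pi (2 * n)) natrM mulrA [pi * _]mulrC.
by rewrite /expi (periodicn (@cosD2pi R)) (periodicn (@sinD2pi R)).
Qed.
Lemma cos_eq1 (t : R) : - (pi *+ 2) < t < pi *+ 2 -> cos t = 1 -> t = 0.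
Proof.
move=> /andP[h1 h2] hc.
have ht : t = (t / 2) *+ 2 by rewrite -(mulr_natr (t / 2) 2) mulfVK // pnatr_eq0.
set u := t / 2 in ht.
have hc2 : cos u ^+ 2 = 1.
  move: hc; rewrite ht cos_mulr2n mulr2n => /eqP.
  rewrite subr_eq => /eqP h.
  have : (cos u ^+ 2) *+ 2 = 1 *+ 2 by rewrite mulr2n h mulr2n.
  by move/eqP; rewrite eqr_pMn2r // => /eqP.
have hs : sin u = 0.
  by apply/eqP; rewrite -sqrf_eq0 sin2cos2 hc2 subrr.
have hu1 : - pi < u.
  have : - (pi *+ 2) < u *+ 2 by rewrite -ht.
  by rewrite -mulNrn ltr_pMn2r.
have hu2 : u < pi.
  have : u *+ 2 < pi *+ 2 by rewrite -ht.
  by rewrite ltr_pMn2r.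
case: (ltrgtP u 0) => hu.
- have : 0 < sin (- u) by apply: sin_gt0_pi; rewrite oppr_gt0 hu ltrNl.
  by rewrite sinN hs oppr0 ltxx.
- have : 0 < sin u by apply: sin_gt0_pi; rewrite hu hu2.
  by rewrite hs ltxx.
- by rewrite ht hu mul0rn.
Qed.
Lemma expi_inj (a b n : nat) : (a < n)%N -> (b < n)%N ->
  expi (2 * pi * a%:R / n%:R : R) = expi (2 * pi * b%:R / n%:R) -> a = b.
Proof.
move=> ha hb [hc hs].
set x := 2 * pi * a%:R / n%:R in hc hs.
set y := 2 * pi * b%:R / n%:R in hc hs.
have hcos : cos (x - y) = 1 by rewrite cosB hc hs -!expr2 cos2Dsin2.
have hn : (0 : R) < n%:R by rewrite ltr0n; case: n ha {hb x y hc hs hcos}.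
have hxy : x - y = (pi *+ 2) * ((a%:R - b%:R) / n%:R).
  by rewrite /x /y -(mulr_natr pi 2); field; rewrite gt_eqF.
have hpi : (0 : R) < pi *+ 2 by rewrite pmulrn_lgt0 // pi_gt0.
have hq1 : (a%:R - b%:R) / n%:R < (1 : R).
  rewrite ltr_pdivrMr // mul1r; have : (a%:R : R) < n%:R by rewrite ltr_nat.
  have : (0 : R) <= b%:R by []. lra.
have hq2 : -1 < (a%:R - b%:R) / n%:R :> R.
  rewrite ltr_pdivlMr // mulN1r; have : (b%:R : R) < n%:R by rewrite ltr_nat.
  have : (0 : R) <= a%:R by []. lra.
have hbd : - (pi *+ 2) < x - y < pi *+ 2.
  rewrite hxy; apply/andP; split.
    by rewrite -[X in X < _]mulrN1 ltr_pM2l.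
  by rewrite -[X in _ < X]mulr1 ltr_pM2l.
have := cos_eq1 (x - y) hbd hcos; rewrite hxy.
move=> /eqP; rewrite mulf_eq0 (gt_eqF hpi) /= mulf_eq0 invr_eq0 (gt_eqF hn) orbF.
by rewrite subr_eq0 eqr_nat => /eqP.
Qed.
Lemma expi_modD (q m n : nat) : (0 < n)%N ->
  expi (2 * pi * (q + m * n)%N%:R / n%:R : R) = expi (2 * pi * q%:R / n%:R).
Proof.
move=> hn; have hn' : (n%:R : R) != 0 by rewrite pnatr_eq0 -lt0n.
rewrite natrD natrM (_ : 2 * pi * (q%:R + m%:R * n%:R) / n%:R
   = 2 * pi * q%:R / n%:R + 2 * pi * m%:R) ?expi_2pin //.
by field.
Qed.

Lemma expi_mod (k c n : nat) : (0 < n)%N ->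
  expi (2 * pi * ((k %% n) * c)%N%:R / n%:R : R) = expi (2 * pi * (k * c)%N%:R / n%:R).
Proof.
move=> hn; rewrite {2}(divn_eq k n) mulnDl addnC mulnAC expi_modD //.
Qed.
End Expi.

Section Grp.
Variables (R : realType) (r : nat) (ns : 'I_r -> nat).

Lemma gaddE (a b : grp ns) x : val (gadd a b x) = ((a x + b x) %% (ns x).+1)%N.
Proof. by rewrite /gadd ffunE. Qed.

Lemma gzeroE x : val (gzero ns x) = 0%N.
Proof. by rewrite /gzero ffunE. Qed.

Lemma fentryC (a b : grp ns) : @fentry R r ns a b = fentry b a.
Proof. by apply: eq_bigr => x _; rewrite mulnC. Qed.

Lemma fentryDl (a b c : grp ns) :
  @fentry R r ns (gadd a b) c = fentry a c * fentry b c.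
Proof.
rewrite /fentry -big_split /=; apply: eq_bigr => x _.
by rewrite gaddE expi_mod // -expiD -mulrDl -mulrDr -natrD mulnDl.
Qed.

Lemma fentry0l (c : grp ns) : @fentry R r ns (gzero ns) c = 1.
Proof.
by rewrite /fentry big1 // => x _; rewrite gzeroE mul0n mulr0 mul0r expi0.
Qed.

Definition gunit (x : 'I_r) : grp ns :=
  @finfun 'I_r (fun y => 'I_(ns y).+1) (fun y => inord (y == x)).

Lemma gunitE x y : val (gunit x y) = if y == x then (0 < ns x)%N : nat else 0%N.
Proof.
rewrite /gunit ffunE /=; case: eqP => [->|_]; last by rewrite inordK.
case: (ns x) => [|n]; first by rewrite /inord /insubd insubF. by rewrite inordK.
Qed.

Lemma fentry_unit (x : 'I_r) (a : grp ns) :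
  @fentry R r ns (gunit x) a =
    expi (2 * pi * ((0 < ns x)%N * a x)%N%:R / (ns x).+1%:R).
Proof.
rewrite /fentry (bigD1 x) //= big1 ?mulr1 ?gunitE ?eqxx // => y /negPf hy.
by rewrite gunitE hy mul0n mulr0 mul0r expi0.
Qed.

Lemma fentry_injr (a b : grp ns) :
  (forall c, @fentry R r ns c a = fentry c b) -> a = b.
Proof.
move=> h; apply/ffunP => x; apply/val_inj.
have := h (gunit x); rewrite !fentry_unit.
case: (ns x) (a x) (b x) => [|n] u v.
  by move=> _; case: u v => [[]//] ? [[]//].
by rewrite !mul1n; apply: expi_inj.
Qed.

Lemma fentry_injl (a b : grp ns) :
  (forall c, @fentry R r ns a c = fentry b c) -> a = b.
Proof. by move=> h; apply: fentry_injr => c; rewrite !(fentryC c). Qed.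
End Grp.
Arguments gunit {r} ns x.

Lemma mod_mix k n d : (0 < n)%N -> (0 < d)%N ->
  (k %% (n * d) = (k %/ d %% n) * d + k %% d)%N.
Proof.
move=> hn hd.
rewrite {1}(divn_eq k d) {1}(divn_eq (k %/ d)%N n).
have h1 := div.ltn_pmod (k %/ d)%N hn; have h2 := div.ltn_pmod k hd.
move: (k %/ d %/ n)%N (k %/ d %% n)%N (k %% d)%N h1 h2 => A B C h1 h2.
have -> : ((A * n + B) * d + C = A * (n * d) + (B * d + C))%N.
  by rewrite mulnDl -addnA mulnA.
rewrite modnMDl modn_small //.
nia.
Qed.

Section Lex.
Variables (r : nat) (ns : 'I_r -> nat).

Lemma card_grp : #|grp ns| = (\prod_(x < r) (ns x).+1)%N.
Proof.
rewrite /grp card_dep_ffun foldrE big_map big_enum /=.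
by apply: eq_bigr => x _; rewrite card_ord.
Qed.

Definition Wt (t : nat) := (\prod_(y < r | (t <= y)%N) (ns y).+1)%N.

Lemma Wt_gt0 t : (0 < Wt t)%N.
Proof. by rewrite /Wt prodn_gt0. Qed.

Lemma Wt_r : Wt r = 1%N.
Proof. by rewrite /Wt big_pred0 // => y; rewrite leqNgt ltn_ord. Qed.

Lemma Wt_0 : Wt 0 = (\prod_(x < r) (ns x).+1)%N.
Proof. by []. Qed.

Lemma Wt_S t (ht : (t < r)%N) : Wt t = ((ns (Ordinal ht)).+1 * Wt t.+1)%N.
Proof.
rewrite /Wt (bigD1 (Ordinal ht)) //=; congr (_ * _)%N.
apply: eq_bigl => y /=; rewrite ltn_neqAle andbC; congr (_ && _).
by rewrite -(inj_eq val_inj) /= eq_sym.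
Qed.

Lemma lexw_Wt x : lexw ns x = Wt x.+1.
Proof. by []. Qed.

Lemma lexdecE k x : val (lexdec ns k x) = ((k %/ lexw ns x) %% (ns x).+1)%N.
Proof. by rewrite /lexdec ffunE /= inordK // div.ltn_pmod. Qed.

Lemma lexdec_inj k k' : lexdec ns k = lexdec ns k' ->
  (k %% Wt 0 = k' %% Wt 0)%N.
Proof.
move=> he.
suff H : forall d, (d <= r)%N -> (k %% Wt (r - d) = k' %% Wt (r - d))%N.
  by have := H r (leqnn r); rewrite subnn.
elim=> [|d IH] hd; first by rewrite subn0 Wt_r !modn1.
have ht : (r - d.+1 < r)%N by lia.
rewrite (Wt_S _ ht) !mod_mix ?Wt_gt0 //.
have -> : (r - d.+1).+1 = (r - d)%N by lia.
rewrite IH ?(ltnW hd) //.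
have := lexdecE k (Ordinal ht); rewrite he lexdecE lexw_Wt /=.
have -> : ((r - d.+1).+1 = r - d)%N by lia.
move=> <-.
by [].
Qed.
End Lex.

Section GrpMore.
Variables (r : nat) (ns : 'I_r -> nat).

Lemma gaddxx (a : grp ns) : gadd a a = a -> a = gzero ns.
Proof.
move=> h; apply/ffunP => x; have := congr1 (fun g : grp ns => g x) h.
rewrite /gadd /gzero !ffunE => h2.
apply: (GRing.addIr (a x)); rewrite /= h2.
by rewrite (_ : ord0 = 0%R) // add0r.
Qed.

Definition gmul (k : nat) (a : grp ns) := iter k (gadd a) (gzero ns).

Lemma gmulE k a x : val (gmul k a x) = ((k * a x) %% (ns x).+1)%N.
Proof.
elim: k => [|k IH] /=; first by rewrite gzeroE.
by rewrite gaddE IH modnDmr mulSn.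
Qed.
End GrpMore.
Arguments gmul {r ns}.

Section Hom.
Variables (r s : nat) (ns : 'I_r -> nat) (ms : 'I_s -> nat).
Variable chi : grp ms -> grp ns.
Hypothesis chiD : forall a b, chi (gadd a b) = gadd (chi a) (chi b).

Lemma chi0 : chi (gzero ms) = gzero ns.
Proof.
apply: gaddxx; rewrite -chiD; congr chi; apply/ffunP => x.
apply: val_inj; by rewrite gaddE !gzeroE.
Qed.

Lemma chi_gmul k a : chi (gmul k a) = gmul k (chi a).
Proof. by elim: k => [|k IH] /=; rewrite ?chi0 // chiD IH. Qed.

Lemma dvd_unit y x :
  ((ns x).+1 %| (ms y).+1 * chi (gunit ms y) x)%N.
Proof.
have h0 : gmul (ms y).+1 (gunit ms y) = gzero ms.
  apply/ffunP => z; apply/val_inj; rewrite gmulE gzeroE gunitE.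
  case: eqP => [->|_]; last by rewrite muln0 mod0n.
  by case: (ms y) => [|n] //=; rewrite ?muln0 ?mod0n // muln1 modnn.
have := congr1 (fun g : grp ns => val (g x)) (chi_gmul (ms y).+1 (gunit ms y)).
by rewrite h0 chi0 gmulE gzeroE /= => /esym/eqP; rewrite -/(dvdn _ _).
Qed.

Variable R : realType.

Definition cxy (y : 'I_s) (x : 'I_r) : nat :=
  ((ms y).+1 * chi (gunit ms y) x %/ (ns x).+1)%N.

Definition Sy (j : grp ns) (y : 'I_s) : nat := (\sum_(x < r) cxy y x * j x)%N.

Definition hexp (j : grp ns) : grp ms :=
  @finfun 'I_s (fun y => 'I_(ms y).+1) (fun y => inord (Sy j y %% (ms y).+1)).

Lemma hexpE j y : val (hexp j y) = (Sy j y %% (ms y).+1)%N.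
Proof. by rewrite /hexp ffunE /= inordK // ltn_pmod. Qed.

Lemma expi_sum (I : finType) (F : I -> R) :
  \prod_(i : I) expi (F i) = expi (\sum_(i : I) F i).
Proof.
by rewrite (big_morph (@expi R) (@expiD R) (@expi0 R)).
Qed.

Lemma hexp_unit y j :
  @fentry R r ns (chi (gunit ms y)) j = fentry (gunit ms y) (hexp j).
Proof.
rewrite fentry_unit hexpE.
set m := (ms y).+1.
have hm : (0 < m)%N by [].
have hmR : (m%:R : R) != 0 by rewrite pnatr_eq0.
have -> : @fentry R r ns (chi (gunit ms y)) j =
    expi (2 * pi * (Sy j y)%:R / m%:R).
  rewrite /fentry expi_sum /Sy natr_sum mulr_sumr mulr_suml.
  congr expi; apply: eq_bigr => x _.
  have hc := divnK (dvd_unit y x); rewrite -/(cxy y x) in hc.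
  have hN : ((ns x).+1%:R : R) != 0 by rewrite pnatr_eq0.
  have hcR : (chi (gunit ms y) x)%:R = (cxy y x)%:R * (ns x).+1%:R / m%:R :> R.
    by rewrite -natrM hc natrM [X in _ = X / _]mulrC mulfK // pnatr_eq0.
  rewrite !natrM hcR; field; rewrite hmR -natr1 addrC in hN *; exact: hN.
case: (ms y) @m hm hmR => [|n] m hm hmR /=.
  rewrite /m modn1 mul0n mulr0 mul0r expi0.
  by rewrite -[Sy j y]add0n -[Sy j y]muln1 expi_modD // mulr0 mul0r expi0.
by rewrite mul1n -[(Sy j y %% m)%N]muln1 expi_mod // muln1.
Qed.

Lemma hexp_spec_n n : forall (i : grp ms) (j : grp ns),
  (\sum_(y < s) i y)%N = n ->
  @fentry R r ns (chi i) j = fentry i (hexp j).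
Proof.
elim: n => [|n IH] i j hs.
  have -> : i = gzero ms.
    apply/ffunP => y; apply: val_inj; rewrite gzeroE /=.
    by move/eqP: hs; rewrite sum_nat_eq0 => /forallP /(_ y) /eqP.
  by rewrite chi0 !fentry0l.
case: (pickP (fun y => 0 < i y)%N) => [y hy | hn]; last first.
  move: hs; rewrite big1 // => z _; have := hn z; rewrite /= lt0n.
  by move/negbFE/eqP.
set i' : grp ms := @finfun 'I_s (fun z => 'I_(ms z).+1)
                     (fun z => inord (i z - (z == y))).
have hi'E z : val (i' z) = (i z - (z == y))%N.
  rewrite /i' ffunE /= inordK //; apply: leq_ltn_trans (leq_subr _ _) _.
  exact: ltn_ord.
have hi : gadd i' (gunit ms y) = i.
  apply/ffunP => z; apply: val_inj; rewrite gaddE gunitE hi'E /=.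
  case: eqP => [->|_]; last by rewrite subn0 addn0 modn_small.
  have hy1 : (0 < ms y)%N by move: (ltn_ord (i y)) hy; lia.
  by rewrite hy1 subn1 addn1 prednK // modn_small.
have hs' : (\sum_(y < s) i' y)%N = n.
  rewrite (bigD1 y) //= in hs; rewrite (bigD1 y) //= hi'E eqxx subn1.
  rewrite (eq_bigr (fun z => nat_of_ord (i z))); last first.
    by move=> z /negPf hz; rewrite hi'E hz subn0.
  by move: hy hs => /=; case: (nat_of_ord (i y)) => // k _; rewrite addSn => -[] <-.
by rewrite -hi chiD fentryDl IH // hexp_unit fentryDl.
Qed.

Lemma hexp_spec i j : @fentry R r ns (chi i) j = fentry i (hexp j).
Proof. exact: (@hexp_spec_n _ i j erefl). Qed.
End Hom.

From mathcomp Require Import fingroup perm.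
Import GRing.Theory.
Local Open Scope ring_scope.

Lemma lex_inj (N r : nat) (ns : 'I_r -> nat) :
  (\prod_(x < r) (ns x).+1)%N = N -> injective (fun k : 'I_N => lexdec ns k).
Proof.
move=> hF k k' /lexdec_inj; rewrite Wt_0 hF !modn_small // => h.
exact: val_inj.
Qed.

Lemma lex_bij (N r : nat) (ns : 'I_r -> nat) :
  (\prod_(x < r) (ns x).+1)%N = N -> bijective (fun k : 'I_N => lexdec ns k).
Proof.
move=> hF; apply: (inj_card_bij (lex_inj _ _ _ hF)).
by rewrite card_grp hF card_ord.
Qed.

Section HFG.
Variables (R : realType) (r s : nat) (ns : 'I_r -> nat) (ms : 'I_s -> nat).
Hypothesis hcard : #|grp ns| = #|grp ms|.

Lemma hFG_spec (chi : grp ms -> grp ns) : is_grp_iso chi ->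
  bijective (@hFG R r s ns ms chi) /\
  forall i j, @fentry R r ns (chi i) j = @fentry R s ms i (@hFG R r s ns ms chi j).
Proof.
move=> [[chiV chiK chiVK] chiD].
have hinj : injective (hexp _ _ _ _ chi).
  move=> j j' he; apply: (@fentry_injr R) => c.
  by rewrite -[c]chiVK !(hexp_spec _ _ _ _ _ chiD R) he.
rewrite /hFG; case: pickP => [h /andP[/andP[hi hc] hp] | hnone].
  split.
    apply: inj_card_bij; last by rewrite hcard.
    by move=> j j' /=; apply: (injectiveP _ hi).
  by move=> i j; move/forallP: hp => /(_ i) /forallP /(_ j) /eqP.
exfalso; have := hnone (finfun (hexp _ _ _ _ chi)).
have hinj' : injective (finfun (hexp _ _ _ _ chi)).
  by move=> j j'; rewrite !ffunE => /hinj.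
move=> /negbT /negP; apply; apply/andP; split; first (apply/andP; split).
- exact/injectiveP.
- apply/forallP => y; apply: (inj_card_onto hinj'); by rewrite hcard.
- apply/forallP => i; apply/forallP => j; rewrite ffunE.
  by rewrite (hexp_spec _ _ _ _ _ chiD R).
Qed.
End HFG.

Lemma hFG_uniq (R : realType) (r s : nat) (ns : 'I_r -> nat) (ms : 'I_s -> nat)
  (hcard : #|grp ns| = #|grp ms|) (chi : grp ms -> grp ns) (h : grp ns -> grp ms) :
  is_grp_iso chi ->
  (forall i j, @fentry R r ns (chi i) j = @fentry R s ms i (h j)) ->
  forall j, @hFG R r s ns ms chi j = h j.
Proof.
move=> hiso hp j; have [_ hp'] := hFG_spec R _ _ _ _ hcard _ hiso.
by apply: (@fentry_injr R) => i; rewrite -hp' hp.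
Qed.

Lemma perm_mxE' (R : nzRingType) n (t : 'S_n) k l :
  (perm_mx t : 'M[R]_n) k l = (t k == l)%:R.
Proof. by rewrite /perm_mx !mxE. Qed.

Lemma invmx_perm (F : fieldType) n (t : 'S_n) :
  invmx (perm_mx t : 'M[F]_n) = perm_mx t^-1.
Proof.
have h : (perm_mx t : 'M[F]_n) *m perm_mx t^-1 = 1%:M.
  by rewrite -perm_mxM mulgV perm_mx1.
by rewrite -[RHS]mul1mx -(mulVmx (unitmx_perm F t)) -mulmxA h mulmx1.
Qed.

Lemma fourier_tr (R : realType) N r (ns : 'I_r -> nat) :
  (@fourier_mx R N r ns)^T = fourier_mx N ns.
Proof. by apply/matrixP => k l; rewrite !mxE fentryC. Qed.

Section Main.
Variables (R : realType) (N r s : nat) (ns : 'I_r -> nat) (ms : 'I_s -> nat).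
Hypotheses (hF : (\prod_(x < r) (ns x).+1)%N = N)
           (hG : (\prod_(x < s) (ms x).+1)%N = N).

Local Notation FF := (@fourier_mx R N r ns).
Local Notation GG := (@fourier_mx R N s ms).

Lemma hcardFG : #|grp ns| = #|grp ms|.
Proof. by rewrite !card_grp hF hG. Qed.

Lemma main_fwd (chi : grp ms -> grp ns) (h : grp ns -> grp ms) :
  is_grp_iso chi -> bijective h ->
  (forall i j, @fentry R r ns (chi i) j = @fentry R s ms i (h j)) ->
  in_Map FF GG (@Pmx R N r s ns ms chi) (@Pinvmx R N r s ns ms h).
Proof.
move=> [[chiV chiK chiVK] chiD] [hV hK hVK] hp.
have [gF LFK gFK] := lex_bij _ _ _ hF.
have [gG LGK gGK] := lex_bij _ _ _ hG.
have sinj : injective (fun k : 'I_N => gF (chi (lexdec ms k))).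
  move=> k k' /(can_inj gFK) /(can_inj chiK) /=.
  exact: (lex_inj _ _ _ hG).
have tinj : injective (fun l : 'I_N => gG (h (lexdec ns l))).
  move=> k k' /(can_inj gGK) /(can_inj hK) /=.
  exact: (lex_inj _ _ _ hF).
set sg := perm sinj; set tg := perm tinj.
have hsg k : lexdec ns (sg k) = chi (lexdec ms k) by rewrite permE /= gFK.
have htg k : lexdec ms (tg k) = h (lexdec ns k) by rewrite permE /= gGK.
have hP : @Pmx R N r s ns ms chi = perm_mx sg.
  apply/matrixP => k l; rewrite perm_mxE' mxE -hsg.
  by rewrite (inj_eq (lex_inj _ _ _ hF)).
have hQ : @Pinvmx R N r s ns ms h = perm_mx tg^-1.
  apply/matrixP => k l; rewrite perm_mxE' mxE -htg.
  rewrite (inj_eq (lex_inj _ _ _ hG)) eq_sym.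
  by rewrite (canF_eq (permKV tg)).
rewrite hP hQ; split; first exact: perm_mx_is_perm.
split; first exact: perm_mx_is_perm.
rewrite invmx_perm invgK -row_permE -[tg]invgK -col_permE.
apply/matrixP => k l; rewrite !mxE hsg hp.
have := htg (tg^-1%g l); rewrite permKV => <-.
by [].
Qed.

Lemma main_bwd (P Q : 'M[R[i]]_N) : in_Map FF GG P Q ->
  exists chi : grp ms -> grp ns, is_grp_iso chi /\
    P = @Pmx R N r s ns ms chi /\ Q = @Pinvmx R N r s ns ms (@hFG R r s ns ms chi).
Proof.
move=> [/is_perm_mxP [sg ->] [/is_perm_mxP [tg ->]]].
rewrite invmx_perm -row_permE -col_permE => heq.
have hE (k l : 'I_N) : fentry (lexdec ms k) (lexdec ms l) =
              fentry (lexdec ns (sg k)) (lexdec ns (tg l)) :> R[i].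
  by have := congr1 (fun M : 'M_N => M k l) heq; rewrite /= !mxE => <-.
have [gF LFK gFK] := lex_bij _ _ _ hF.
have [gG LGK gGK] := lex_bij _ _ _ hG.
pose chi (g : grp ms) : grp ns := lexdec ns (sg (gG g)).
pose h (f : grp ns) : grp ms := lexdec ms (tg^-1%g (gF f)).
have hp i j : @fentry R r ns (chi i) j = @fentry R s ms i (h j).
  by rewrite /chi /h -{2}(gGK i) hE permKV gFK.
have chiB : bijective chi.
  exists (fun f => lexdec ms (sg^-1%g (gF f))) => x.
    by rewrite /chi LFK permK gGK.
  by rewrite /chi LGK permKV gFK.
have chiD a b : chi (gadd a b) = gadd (chi a) (chi b).
  apply: (@fentry_injl R) => j.
  by rewrite hp !fentryDl !hp.
have hiso : is_grp_iso chi by [].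
exists chi; split => //; split.
  apply/matrixP => k l; rewrite perm_mxE' mxE /chi LGK.
  by rewrite (inj_eq (lex_inj _ _ _ hF)).
apply/matrixP => k l; rewrite perm_mxE' mxE (hFG_uniq R _ _ _ _ hcardFG _ _ hiso hp).
rewrite /h LFK (inj_eq (lex_inj _ _ _ hG)) eq_sym.
by rewrite (canF_eq (permKV tg)).
Qed.

Lemma main_sym (P Q : 'M[R[i]]_N) : in_Map FF GG P Q -> in_Map FF GG Q P.
Proof.
move=> [/is_perm_mxP [sg ->] [/is_perm_mxP [tg ->]]].
rewrite invmx_perm => heq.
split; first exact: perm_mx_is_perm.
split; first exact: perm_mx_is_perm.
have := congr1 trmx heq; rewrite !trmx_mul !tr_perm_mx invgK !fourier_tr.
by rewrite invmx_perm mulmxA.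
Qed.

Lemma mapE (P Q : 'M[R[i]]_N) :
  in_Map FF GG P Q <->
  exists chi : grp ms -> grp ns, is_grp_iso chi /\
    P = @Pmx R N r s ns ms chi /\ Q = @Pinvmx R N r s ns ms (@hFG R r s ns ms chi).
Proof.
split; first exact: main_bwd.
move=> [chi [hiso [-> ->]]].
have [hb hp] := hFG_spec R _ _ _ _ hcardFG _ hiso.
exact: main_fwd.
Qed.

Lemma mapE' (P Q : 'M[R[i]]_N) :
  in_Map FF GG P Q <->
  exists chi : grp ms -> grp ns, is_grp_iso chi /\
    P = @Pinvmx R N r s ns ms (@hFG R r s ns ms chi) /\ Q = @Pmx R N r s ns ms chi.
Proof.
split.
  move=> /main_sym /mapE [chi [hiso [h1 h2]]]; by exists chi.
move=> [chi [hiso [h1 h2]]]; apply: main_sym; apply/mapE; by exists chi.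
Qed.
End Main.

Theorem corollary4p8 (R : realType) (N r s : nat)
    (ns : 'I_r -> nat) (ms : 'I_s -> nat)
    (hF : (\prod_(x < r) (ns x).+1)%N = N)
    (hG : (\prod_(x < s) (ms x).+1)%N = N) :
  (* (a) *)
  (forall P Q : 'M[R[i]]_N,
     (in_Stab (@fourier_mx R N r ns) P Q <->
      exists rho : grp ns -> grp ns, is_grp_iso rho /\
        P = @Pmx R N r r ns ns rho /\
        Q = @Pinvmx R N r r ns ns (@hFG R r r ns ns rho)) /\
     (in_Stab (@fourier_mx R N r ns) P Q <->
      exists rho : grp ns -> grp ns, is_grp_iso rho /\
        P = @Pinvmx R N r r ns ns (@hFG R r r ns ns rho) /\
        Q = @Pmx R N r r ns ns rho)) /\
  (* (b) *)
  (forall P Q : 'M[R[i]]_N,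
     (in_Map (@fourier_mx R N r ns) (@fourier_mx R N s ms) P Q <->
      exists chi : grp ms -> grp ns, is_grp_iso chi /\
        P = @Pmx R N r s ns ms chi /\
        Q = @Pinvmx R N r s ns ms (@hFG R r s ns ms chi)) /\
     (in_Map (@fourier_mx R N r ns) (@fourier_mx R N s ms) P Q <->
      exists chi : grp ms -> grp ns, is_grp_iso chi /\
        P = @Pinvmx R N r s ns ms (@hFG R r s ns ms chi) /\
        Q = @Pmx R N r s ns ms chi)).
Proof.
split=> P Q; split.
- exact: (mapE R N r r ns ns hF hF).
- exact: (mapE' R N r r ns ns hF hF).
- exact: (mapE R N r s ns ms hF hG).
- exact: (mapE' R N r s ns ms hF hG).
Qed.
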